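(* Let $p,q\in\{1,\dots,n\}$ and integers $m\ge l$. If $u\in\mathcal{M}(Y_p(m))$ and $v\in\mathcal{M}(Y_q(l))$ are such that $u\cdot v$ is a highest weight vector in $\mathcal{M}(Y_p(m))\cdot\mathcal{M}(Y_q(l))$, then $u=Y_p(m)$.
   Context: Fix $n\ge 2$ and type $C_n$ with $I=\{1,\dots,n\}$ and fundamental weights $\Lambda_i$. Let $\mathcal{M}$ be the set of Laurent monomials $M=\prod_{i\in I,k\in\mathbb{Z}}Y_i(k)^{y_i(k)}$ ($y_i(k)\in\mathbb{Z}$, finitely many nonzero); put $Y_0(k)=Y_{n+1}(k)=1$, $A_i(k)=Y_i(k)Y_i(k+1)Y_{i-1}(k+1)^{-1}Y_{i+1}(k)^{-1}$ ($i\ne n$), $A_n(k)=Y_n(k)Y_n(k+1)Y_{n-1}(k+1)^{-2}$. Crystal structure: $\mathrm{wt}(M)=\sum_i(\sum_k y_i(k))\Lambda_i$, $\varphi_i(M)=\max_k\sum_{j\le k}y_i(j)$, $\varepsilon_i(M)=\max_k(-\sum_{j>k}y_i(j))$; $\tilde f_iM=0$ if $\varphi_i(M)=0$, else $A_i(n_f)^{-1}M$ with $n_f=\min\{k:\varphi_i(M)=\sum_{j\le k}y_i(j)\}$; $\tilde e_iM=0$ if $\varepsilon_i(M)=0$, else $A_i(n_e)M$ with $n_e=\max\{k:\varphi_i(M)=\sum_{j\le k}y_i(j)\}$. A highest weight vector is a monomial $M$ with $\varepsilon_i(M)=0$ for all $i\in I$. For a highest weight monomial $Y$, $\mathcal{M}(Y)$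 is the connected component of $\mathcal{M}$ containing $Y$. For $S,T\subset\mathcal{M}$, $S\cdot T=\{M_1M_2:M_1\in S,M_2\in T\}$, with the crystal structure induced from $\mathcal{M}$. *)

(* Defs.v *)
(* Monomials in the Y_i(k) are elements of the free abelian
   group {freeg (nat * int) / int} (multinomials' freeg): the monomial
   prod Y_i(k)^{y_i(k)} is \sum y_i(k) <<(i,k)>>, so monomial multiplication
   is addition, and y_i(k) = coeff (i,k) M. *)
From HB Require Import structures.
From mathcomp Require Import all_boot all_order all_algebra.
From mathcomp.multinomials Require Import freeg.
Set Implicit Arguments.
Unset Strict Implicit.
Unset Printing Implicit Defensive.
Import Order.TTheory GRing.Theory Num.Theory.
Local Open Scope ring_scope.

Definition mono := {freeg (nat * int)%type / int}.

Section Crystal.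
Variable n : nat.

Definition inI (i : nat) : bool := (1 <= i <= n)%N.

Definition yexp (M : mono) (i : nat) (k : int) : int := coeff (i, k) M.

(* the monomial Y_i(k); Y_0(k) = Y_{n+1}(k) = 1 (the unit, i.e. 0 here) *)
Definition Y (i : nat) (k : int) : mono := if inI i then << (i, k) >> else 0.

(* A_i(k), type C_n *)
Definition A (i : nat) (k : int) : mono :=
  if i == n then Y n k + Y n (k + 1) - (Y n.-1 (k + 1) *+ 2)
  else Y i k + Y i (k + 1) - Y i.-1 (k + 1) - Y i.+1 k.

Definition psum (M : mono) (i : nat) (k : int) : int :=
  \sum_(x <- dom M | (x.1 == i) && (x.2 <= k)) coeff x M.

Definition tsum (M : mono) (i : nat) (k : int) : int :=
  \sum_(x <- dom M | (x.1 == i) && (k < x.2)) coeff x M.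

Definition is_phi (M : mono) (i : nat) (c : int) : Prop :=
  (exists k, psum M i k = c) /\ (forall k, psum M i k <= c).

Definition is_eps (M : mono) (i : nat) (c : int) : Prop :=
  (exists k, - tsum M i k = c) /\ (forall k, - tsum M i k <= c).

Definition fstep (i : nat) (M N : mono) : Prop :=
  exists c nf, [/\ is_phi M i c, 0 < c, psum M i nf = c,
    (forall k, psum M i k = c -> nf <= k) & N = M - A i nf].

Definition estep (i : nat) (M N : mono) : Prop :=
  exists e c ne, [/\ is_eps M i e, 0 < e, is_phi M i c &
    [/\ psum M i ne = c, (forall k, psum M i k = c -> k <= ne) & N = M + A i ne]].

Definition cedge (M N : mono) : Prop :=
  exists i, inI i /\ [\/ fstep i M N, estep i M N, fstep i N M | estep i N M].

Inductive mcomp (Y0 : mono) : mono -> Prop :=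
| mcomp_refl : mcomp Y0 Y0
| mcomp_step M N : mcomp Y0 M -> cedge M N -> mcomp Y0 N.

Definition highest (M : mono) : Prop := forall i, inI i -> is_eps M i 0.

End Crystal.

(* Main.v *)
Require Import Defs.
From HB Require Import structures.
From mathcomp Require Import all_boot all_order all_algebra.
From mathcomp.multinomials Require Import freeg.
From mathcomp Require Import zify ring.
Import Order.TTheory GRing.Theory Num.Theory.
Local Open Scope ring_scope.

Set Implicit Arguments.
Unset Strict Implicit.
Unset Printing Implicit Defensive.


Lemma sum_pred1_seq (s : seq (nat * int)) (a : nat * int) (F : nat * int -> int) :
  uniq s -> \sum_(x <- s | x == a) F x = if a \in s then F a else 0.
Proof.
move=> us; rewrite -big_filter.
case: ifP => ha.
  by rewrite (filter_pred1_uniq us ha) big_seq1.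
rewrite big1_seq // => x /andP[_]; rewrite mem_filter => /andP[/eqP -> ]; by rewrite ha.
Qed.

Lemma coeff_dom_sum (M : mono) a :
  \sum_(x <- dom M | x == a) coeff x M = coeff a M.
Proof.
rewrite sum_pred1_seq ?uniq_dom //; case: ifP => // /negbT h.
by rewrite coeff_outdom.
Qed.

Lemma jump (M : mono) i k : psum M i k - psum M i (k - 1) = coeff (i, k) M.
Proof.
rewrite /psum (bigID (fun x : nat * int => x.2 <= k - 1)) /=.
rewrite -coeff_dom_sum.
have -> : \sum_(i0 <- dom M | ((i0.1 == i) && (i0.2 <= k)) && (i0.2 <= k - 1)) coeff i0 M
   = \sum_(x <- dom M | (x.1 == i) && (x.2 <= k - 1)) coeff x M.
  apply: eq_bigl => -[a b] /=; case: (a == i) => //=.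
  apply/idP/idP; [by case/andP | move=> h; rewrite h andbT; lia].
rewrite addrAC subrr add0r; apply: eq_bigl => -[a b] /=.
rewrite xpair_eqE; case: (a == i) => //=.
apply/idP/idP; [case/andP => h1 h2; apply/eqP; lia | move/eqP ->; apply/andP; split; lia].
Qed.

Lemma tsum_last (M : mono) I K :
  (forall k, K < k -> coeff (I, k) M = 0) -> tsum M I (K - 1) = coeff (I, K) M.
Proof.
move=> h; rewrite /tsum -coeff_dom_sum big_seq_cond [RHS]big_seq_cond.
apply: eq_bigl => -[a b] /=; rewrite xpair_eqE.
case hd: ((a, b) \in dom M) => //=.
case: (a =P I) => [ea | ne] /=; last by []. subst a.
apply/idP/idP; last by move/eqP ->; lia.
move=> hb; apply/eqP; case: (ltrP K b) => hKb; last by lia.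
by move: hd; rewrite mem_dom h // eqxx.
Qed.


Ltac meq := apply/eqP/freeg_eqP => ?; rewrite ?(coeffD, coeffN, coeffB, coeffMn, coeff0); ring.

Definition box (n c : nat) (T : int) : mono :=
  if (c <= n)%N then Y n c T - Y n c.-1 (T + 1)
  else Y n (2 * n - c) (T + (c - n)%:Z) - Y n ((2 * n).+1 - c) (T + (c - n)%:Z).

Definition iot (n e : nat) : nat := if (e <= n)%N then e else (2 * n - e)%N.
Definition tau (n e : nat) (T : int) : int := if (e <= n)%N then T else T + (e - n)%:Z.

Lemma box_step n e T : (2 <= n)%N -> (0 < e)%N -> (e < 2 * n)%N ->
  box n e.+1 T - box n e T = - A n (iot n e) (tau n e T).
Proof.
move=> hn he1 he2; rewrite /box /iot /tau /A.
case: (ltngtP e n) => hen.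
- rewrite (ltn_eqF hen) /=; meq.
- idtac.
  have hi : (2 * n - e != n)%N by apply/eqP; lia.
  rewrite (negbTE hi).
  have -> : (2 * n - e.+1 = (2 * n - e).-1)%N by lia.
  have -> : ((2 * n).+1 - e = (2 * n - e).+1)%N by lia.
  have -> : ((2 * n).+1 - e.+1 = (2 * n - e))%N by lia.
  have -> : T + (e.+1 - n)%:Z = T + (e - n)%:Z + 1 by lia.
  meq.
- subst e; rewrite ?leqnn ?ltnn ?eqxx /=.
  have -> : (2 * n - n.+1 = n.-1)%N by lia.
  have -> : ((2 * n).+1 - n.+1 = n)%N by lia.
  have -> : (n.+1 - n)%N = 1%N by lia.
  meq.
Qed.

Fixpoint colm (n : nat) (m : int) (cs : seq nat) : mono :=
  match cs with [::] => 0 | c :: r => box n c (m + (size r)%:Z) + colm n m r end.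

Fixpoint tm (m : int) (cs : seq nat) (v : nat) : int :=
  match cs with [::] => m | c :: r => if c == v then m + (size r)%:Z else tm m r v end.

Lemma Y0 n k : Y n 0 k = 0.
Proof. by rewrite /Y /inI. Qed.

Lemma colm_iota n m a k : (0 < a)%N -> (a + k <= n.+1)%N ->
  colm n m (iota a k) = Y n (a + k).-1 m - Y n a.-1 (m + k%:Z).
Proof.
elim: k a => [|k IH] a ha hak /=.
  by rewrite addn0 addr0 subrr.
rewrite IH //; last by lia.
rewrite /box (_ : (a <= n)%N); last by lia.
have -> : (a.+1 + k).-1 = (a + k.+1).-1 by lia.
have -> : m + (size (iota a.+1 k))%:Z + 1 = m + (k.+1)%:Z by rewrite size_iota -addn1 PoszD addrA.
have -> : (a.+1.-1 = a)%N by [].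
have -> : m + (size (iota a.+1 k))%:Z = m + k%:Z by rewrite size_iota.
meq.
Qed.

Lemma colm_top n m p : inI n p -> colm n m (iota 1 p) = Y n p m.
Proof.
move=> /andP[h1 h2]; have hp : (1 + p <= n.+1)%N by lia.
by rewrite colm_iota // Y0 subr0 add1n.
Qed.

Lemma coeff_colm n m cs x : uniq cs ->
  coeff x (colm n m cs) = \sum_(v <- cs) coeff x (box n v (tm m cs v)).
Proof.
elim: cs => [|c r IH] /=; first by rewrite big_nil coeff0.
case/andP => hc hu; rewrite big_cons coeffD eqxx IH //; congr (_ + _).
apply: eq_big_seq => v hv; case: eqP => // ec; subst; by rewrite hv in hc.
Qed.

Lemma colm_repl n m cs v w : uniq cs -> v \in cs ->
  colm n m (map (fun x => if x == v then w else x) cs) =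
  colm n m cs - box n v (tm m cs v) + box n w (tm m cs v).
Proof.
elim: cs => [|c r IH] //= /andP[hc hu].
rewrite size_map in_cons; case: (c =P v) => [ec _ | ne /= hv].
  subst c.
  have -> : map (fun x => if x == v then w else x) r = r.
    rewrite -[RHS]map_id; apply/eq_in_map => x hx; case: eqP => // ex; subst.
    by rewrite hx in hc.
  meq.
have hv' : v \in r.
  by move: hv; case: eqP => [e|] //=; subst; case: ne.
rewrite IH //; meq.
Qed.

Lemma sorted_cons (c : nat) r : sorted ltn (c :: r) -> all (ltn c) r /\ sorted ltn r.
Proof. by move=> /= hs; move: hs; rewrite path_sortedE; [case/andP | exact: ltn_trans]. Qed.

Lemma in_cons_ne (x c : nat) r : x \in c :: r -> x <> c -> x \in r.
Proof. by rewrite in_cons; case: eqP. Qed.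

Lemma tm_adj m cs v : sorted ltn cs -> v \in cs -> v.+1 \in cs ->
  tm m cs v = tm m cs v.+1 + 1.
Proof.
elim: cs => [|c r IH] // hs hv hv1.
have [hall hsr] := sorted_cons hs.
case: (c =P v) => [ec | ne].
  subst c; have nv : (v == v.+1) = false by lia.
  have hv1' : v.+1 \in r by apply: (in_cons_ne hv1); lia.
  rewrite /= nv eqxx.
  case: r hall hsr hv1' {IH hs hv hv1} => [|d r'] // hall hsr hv1.
  move: hall => /= /andP[hd hall'].
  case: (d =P v.+1) => [ed | nd].
    subst d; rewrite /= ?eqxx; lia.
  exfalso.
  have hin : v.+1 \in r' by apply: (in_cons_ne hv1) => e; apply: nd.
  have [hd' _] := sorted_cons hsr.
  move/allP: hd' => /(_ _ hin) /=; lia.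
have hv' : v \in r by apply: (in_cons_ne hv) => e; apply: ne.
case: (c =P v.+1) => [ec | nc].
  subst c; exfalso; move/allP: hall => /(_ _ hv') /=; lia.
have hv1' : v.+1 \in r by apply: (in_cons_ne hv1) => e; apply: nc.
rewrite /= (introF eqP ne) (introF eqP nc); exact: IH.
Qed.


Lemma Ycoeff n j t i k : coeff (i, k) (Y n j t) = (inI n j && (j == i) && (t == k))%:R.
Proof.
rewrite /Y; case: (inI n j) => /=; last by rewrite coeff0.
by rewrite coeffU mul1r xpair_eqE.
Qed.

Lemma boxco n v T i t : inI n i ->
  coeff (i, t) (box n v T) =
  if (v <= n)%N then ((v == i) && (T == t))%:R - ((v.-1 == i) && (T + 1 == t))%:R
  else ((2 * n - v == i)%N && (T + (v - n)%:Z == t))%:R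
       - (((2 * n).+1 - v == i)%N && (T + (v - n)%:Z == t))%:R.
Proof.
move=> hi.
have h a : (inI n a && (a == i)) = (a == i) by case: (a =P i) => [->|]; rewrite ?hi ?andbF.
by rewrite /box; case: ifP => _; rewrite coeffB !Ycoeff !h.
Qed.

Lemma box_i n i T t : inI n i -> coeff (i, t) (box n i T) = (T == t)%:R.
Proof.
move=> hi; rewrite boxco //; move: hi => /andP[h1 h2]; rewrite h2 eqxx /=.
by rewrite (_ : (i.-1 == i) = false) ?subr0 //; lia.
Qed.

Lemma box_i1 n i T t : inI n i -> coeff (i, t) (box n i.+1 T) = - (T + 1 == t)%:R.
Proof.
move=> hi; rewrite boxco //; move: hi => /andP[h1 h2].
case: ifP => h3 /=.
  by rewrite eqxx (_ : (i.+1 == i) = false) ?sub0r //; lia.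
have e1 : i = n by lia.
subst i; rewrite (_ : (2 * n - n.+1 == n)%N = false); last by lia.
rewrite (_ : ((2 * n).+1 - n.+1 == n)%N = true); last by lia.
by rewrite (_ : ((n.+1 - n)%N)%:Z = 1) ?sub0r //; lia.
Qed.

Lemma box_bi n i T t : (1 <= i)%N -> (i < n)%N ->
  coeff (i, t) (box n (2 * n - i) T) = (T + (n - i)%:Z == t)%:R.
Proof.
move=> h1 h2; rewrite boxco; last by apply/andP; split; lia.
rewrite (_ : (2 * n - i <= n)%N = false); last by lia.
rewrite (_ : (2 * n - (2 * n - i) == i)%N = true); last by lia.
rewrite (_ : ((2 * n).+1 - (2 * n - i) == i)%N = false); last by lia.
by rewrite (_ : ((2 * n - i - n)%N)%:Z = ((n - i)%N)%:Z) ?subr0 //; lia.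
Qed.

Lemma box_bi1 n i T t : (1 <= i)%N -> (i < n)%N ->
  coeff (i, t) (box n ((2 * n).+1 - i) T) = - (T + (n - i)%:Z + 1 == t)%:R.
Proof.
move=> h1 h2; rewrite boxco; last by apply/andP; split; lia.
rewrite (_ : ((2 * n).+1 - i <= n)%N = false); last by lia.
rewrite (_ : (2 * n - ((2 * n).+1 - i) == i)%N = false); last by lia.
rewrite (_ : ((2 * n).+1 - ((2 * n).+1 - i) == i)%N = true); last by lia.
by rewrite (_ : T + (((2 * n).+1 - i - n)%N)%:Z = T + ((n - i)%N)%:Z + 1) ?sub0r //; lia.
Qed.

Lemma box_zero n i v T t : inI n i -> v != i -> v != i.+1 -> v != (2 * n - i)%N ->
  v != ((2 * n).+1 - i)%N -> coeff (i, t) (box n v T) = 0.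
Proof.
move=> hi n1 n2 n3 n4; have /andP[h1 h2] := hi.
rewrite boxco //; case: ifP => hv.
  have e : (v.-1 == i)%N = false by clear - n2 h1; lia.
  by rewrite (negbTE n1) e subrr.
have e1 : (2 * n - v == i)%N = false by clear - n3 hv h1 h2; lia.
have e2 : ((2 * n).+1 - v == i)%N = false by clear - n4 hv h1 h2; lia.
by rewrite e1 e2 subrr.
Qed.

Lemma sum_restrict (cs S : seq nat) (G : nat -> int) : uniq cs -> uniq S ->
  (forall v, v \in cs -> v \notin S -> G v = 0) ->
  \sum_(v <- cs) G v = \sum_(v <- S | v \in cs) G v.
Proof.
move=> ucs uS h.
rewrite (bigID (fun v => v \in S)) /= [X in _ + X]big1_seq ?addr0; last first.
  by move=> v /andP[hn hv]; apply: h.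
rewrite -[LHS]big_filter -[RHS]big_filter; apply: perm_big; apply: uniq_perm.
- exact: filter_uniq.
- exact: filter_uniq.
by move=> x; rewrite !mem_filter andbC.
Qed.

Lemma pos4 (b1 b2 b3 b4 x1 x2 x3 x4 : bool) :
  (b1 -> b2 -> x1 = x2) -> (b3 -> b4 -> x3 = x4) ->
  0 < (if b1 then x1%:R else 0) + ((if b2 then - x2%:R else 0) +
      ((if b3 then x3%:R else 0) + ((if b4 then - x4%:R else 0) + 0))) :> int ->
  (b1 && ~~ b2 && x1) || (b3 && ~~ b4 && x3).
Proof.
case: b1; case: b2 => h1; rewrite ?(h1 isT isT) {h1};
case: b3; case: b4 => h2; rewrite ?(h2 isT isT) {h2};
by case: x1; case: x2; case: x3; case: x4.
Qed.

Lemma neg4 (b1 b2 b3 b4 x1 x2 x3 x4 : bool) :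
  (b1 -> b2 -> x1 = x2) -> (b3 -> b4 -> x3 = x4) ->
  (if b1 then x1%:R else 0) + ((if b2 then - x2%:R else 0) +
      ((if b3 then x3%:R else 0) + ((if b4 then - x4%:R else 0) + 0))) < 0 :> int ->
  (b2 && ~~ b1 && x2) || (b4 && ~~ b3 && x4).
Proof.
case: b1; case: b2 => h1; rewrite ?(h1 isT isT) {h1};
case: b3; case: b4 => h2; rewrite ?(h2 isT isT) {h2};
by case: x1; case: x2; case: x3; case: x4.
Qed.

Lemma pos2 (b1 b2 x1 x2 : bool) : (b1 -> b2 -> x1 = x2) ->
  0 < (if b1 then x1%:R else 0) + ((if b2 then - x2%:R else 0) + 0) :> int ->
  b1 && ~~ b2 && x1.
Proof. by case: b1; case: b2 => h1; rewrite ?(h1 isT isT) {h1}; case: x1; case: x2. Qed.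

Lemma neg2 (b1 b2 x1 x2 : bool) : (b1 -> b2 -> x1 = x2) ->
  (if b1 then x1%:R else 0) + ((if b2 then - x2%:R else 0) + 0) < 0 :> int ->
  b2 && ~~ b1 && x2.
Proof. by case: b1; case: b2 => h1; rewrite ?(h1 isT isT) {h1}; case: x1; case: x2. Qed.


Lemma sorted_uniq_ltn (cs : seq nat) : sorted ltn cs -> uniq cs.
Proof. exact: (sorted_uniq ltn_trans ltnn). Qed.

Lemma CF_core n m cs i t : (2 <= n)%N -> sorted ltn cs -> inI n i ->
  0 < coeff (i, t) (colm n m cs) ->
  exists v, [/\ v \in cs, v.+1 \notin cs &
    (v = i /\ tm m cs v = t) \/ [/\ (i < n)%N, v = (2 * n - i)%N & tm m cs v + (n - i)%:Z = t]].
Proof.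
move=> hn hs hi; have u := sorted_uniq_ltn hs; have /andP[h1 h2] := hi.
rewrite coeff_colm //.
have [hlt | heq] : (i < n)%N \/ i = n by lia.
- rewrite (@sum_restrict _ [:: i; i.+1; (2 * n - i)%N; ((2 * n).+1 - i)%N]) //; first last.
  + move=> v _; rewrite !inE => /norP[n1 /norP[n2 /norP[n3 n4]]].
    exact: box_zero.
  + rewrite /= !inE; lia.
  rewrite big_mkcond !big_cons big_nil /=.
  rewrite box_i // box_i1 // box_bi // box_bi1 //.
  have e : ((2 * n).+1 - i)%N = (2 * n - i).+1 by lia.
  have a1 : i \in cs -> i.+1 \in cs -> (tm m cs i == t) = (tm m cs i.+1 + 1 == t).
    by move=> a b; rewrite (tm_adj m hs a b).
  have a2 : (2 * n - i)%N \in cs -> (2 * n - i).+1 \in cs ->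
      (tm m cs (2 * n - i)%N + ((n - i)%N)%:Z == t) = (tm m cs (2 * n - i).+1 + ((n - i)%N)%:Z + 1 == t).
    by move=> a b; rewrite (tm_adj m hs a b); apply/eqP/eqP; lia.
  rewrite e => /(pos4 a1 a2).
  case/orP => /andP[/andP[a b] /eqP c].
    by exists i; split => //; left.
  by exists (2 * n - i)%N; split => //; right.
- subst i.
  rewrite (@sum_restrict _ [:: n; n.+1]) //; first last.
  + move=> v _; rewrite !inE => /norP[n1 n2].
    apply: box_zero => //; apply/eqP; lia.
  + by rewrite /= !inE andbT; lia.
  rewrite big_mkcond !big_cons big_nil /=.
  have a1 : n \in cs -> n.+1 \in cs -> (tm m cs n == t) = (tm m cs n.+1 + 1 == t).
    by move=> a b; rewrite (tm_adj m hs a b).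
  rewrite box_i // box_i1 // => /(pos2 a1).
  case/andP => /andP[a b] /eqP c.
  by exists n; split => //; left.
Qed.

Lemma CE_core n m cs i t : (2 <= n)%N -> sorted ltn cs -> inI n i ->
  coeff (i, t + 1) (colm n m cs) < 0 ->
  exists v, [/\ v \in cs, v.-1 \notin cs &
    (v = i.+1 /\ tm m cs v = t) \/ [/\ (i < n)%N, v = (2 * n - i).+1 & tm m cs v + (n - i)%:Z = t]].
Proof.
move=> hn hs hi; have u := sorted_uniq_ltn hs; have /andP[h1 h2] := hi.
rewrite coeff_colm //.
have [hlt | heq] : (i < n)%N \/ i = n by lia.
- rewrite (@sum_restrict _ [:: i; i.+1; (2 * n - i)%N; ((2 * n).+1 - i)%N]) //; first last.
  + move=> v _; rewrite !inE => /norP[n1 /norP[n2 /norP[n3 n4]]].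
    exact: box_zero.
  + rewrite /= !inE; lia.
  rewrite big_mkcond !big_cons big_nil /=.
  rewrite box_i // box_i1 // box_bi // box_bi1 //.
  have e : ((2 * n).+1 - i)%N = (2 * n - i).+1 by lia.
  have a1 : i \in cs -> i.+1 \in cs -> (tm m cs i == t + 1) = (tm m cs i.+1 + 1 == t + 1).
    by move=> a b; rewrite (tm_adj m hs a b).
  have a2 : (2 * n - i)%N \in cs -> (2 * n - i).+1 \in cs ->
      (tm m cs (2 * n - i)%N + ((n - i)%N)%:Z == t + 1) = (tm m cs (2 * n - i).+1 + ((n - i)%N)%:Z + 1 == t + 1).
    by move=> a b; rewrite (tm_adj m hs a b); apply/eqP/eqP; lia.
  rewrite e => /(neg4 a1 a2).
  case/orP => /andP[/andP[a b] /eqP c].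
    by exists i.+1; split => //; left; split => //; lia.
  by exists (2 * n - i).+1; split => //; right; split => //; lia.
- subst i.
  rewrite (@sum_restrict _ [:: n; n.+1]) //; first last.
  + move=> v _; rewrite !inE => /norP[n1 n2].
    apply: box_zero => //; apply/eqP; lia.
  + by rewrite /= !inE andbT; lia.
  rewrite big_mkcond !big_cons big_nil /=.
  have a1 : n \in cs -> n.+1 \in cs -> (tm m cs n == t + 1) = (tm m cs n.+1 + 1 == t + 1).
    by move=> a b; rewrite (tm_adj m hs a b).
  rewrite box_i // box_i1 // => /(neg2 a1).
  case/andP => /andP[a b] /eqP c.
  by exists n.+1; split => //; left; split => //; lia.
Qed.

Lemma sorted_consE (c : nat) r : sorted ltn (c :: r) = all (ltn c) r && sorted ltn r.
Proof. exact: (path_sortedE ltn_trans). Qed.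

Lemma sorted_repl (cs : seq nat) v w : sorted ltn cs -> v \in cs -> w \notin cs ->
  (forall x, x \in cs -> (x < v)%N -> (x < w)%N) ->
  (forall x, x \in cs -> (v < x)%N -> (w < x)%N) ->
  sorted ltn (map (fun x => if x == v then w else x) cs).
Proof.
elim: cs => [|c r IH] // hs hv hw hlo hhi.
move: (hs); rewrite sorted_consE => /andP[hall hsr].
have hwr : w \notin r by apply: contra hw; rewrite in_cons orbC => ->.
case: (c =P v) => [ec | ne].
  subst c; rewrite /= eqxx.
  have -> : map (fun x => if x == v then w else x) r = r.
    rewrite -[RHS]map_id; apply/eq_in_map => x hx; case: eqP => // ex; subst.
    by move/allP: hall => /(_ _ hx) /=; lia.
  rewrite (path_sortedE ltn_trans) hsr andbT; apply/allP => x hx.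
  apply: hhi; first by rewrite in_cons hx orbT.
  by move/allP: hall => /(_ _ hx).
have hvr : v \in r by apply: (in_cons_ne hv) => e; apply: ne.
rewrite /= (introF eqP ne) (path_sortedE ltn_trans); apply/andP; split.
  apply/allP => x /mapP[y hy ->]; case: (y =P v) => [ey | ney] /=.
    subst y; apply: hlo; first by rewrite in_cons eqxx.
    by move/allP: hall => /(_ _ hy).
  by move/allP: hall => /(_ _ hy).
apply: IH => // x hx; [apply: hlo | apply: hhi]; by rewrite in_cons hx orbT.
Qed.

Definition colok n p (cs : seq nat) :=
  [&& sorted ltn cs, all (fun c => (0 < c <= 2 * n)%N) cs & size cs == p].

Lemma CF n m p cs i t : (2 <= n)%N -> colok n p cs -> inI n i ->
  0 < coeff (i, t) (colm n m cs) ->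
  exists cs', colok n p cs' /\ colm n m cs' = colm n m cs - A n i t.
Proof.
move=> hn /and3P[hs hb hsz] hi hc; have /andP[h1 h2] := hi.
have u := sorted_uniq_ltn hs.
have [v [hv hv1 hcase]] := CF_core hn hs hi hc.
have /andP[hv0 hv2] : (0 < v <= 2 * n)%N by move/allP: hb => /(_ _ hv).
have hvlt : (v < 2 * n)%N by case: hcase => [[-> _] | [? -> _]]; lia.
set T := tm m cs v.
have hst : box n v.+1 T - box n v T = - A n i t.
  rewrite box_step // /iot /tau.
  case: hcase => [[ev et] | [hin ev et]].
    by subst v; rewrite h2 /T et.
  subst v; rewrite (_ : (2 * n - i <= n)%N = false); last by lia.
  rewrite (_ : (2 * n - (2 * n - i))%N = i); last by lia.
  by rewrite (_ : (2 * n - i - n)%N = (n - i)%N) ?/T ?et //; lia.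
exists (map (fun x => if x == v then v.+1 else x) cs); split.
  apply/and3P; split.
  - apply: sorted_repl => // x hx; first lia.
    move=> hvx; have : x != v.+1 by apply: contraNneq hv1 => <-.
    lia.
  - apply/allP => y /mapP[x hx ->]; case: eqP => [_|_]; first lia.
    by move/allP: hb => /(_ _ hx).
  - by rewrite size_map.
by rewrite colm_repl // -addrA [- box _ _ _ + _]addrC hst.
Qed.

Lemma CE n m p cs i t : (2 <= n)%N -> colok n p cs -> inI n i ->
  coeff (i, t + 1) (colm n m cs) < 0 ->
  exists cs', colok n p cs' /\ colm n m cs' = colm n m cs + A n i t.
Proof.
move=> hn /and3P[hs hb hsz] hi hc; have /andP[h1 h2] := hi.
have u := sorted_uniq_ltn hs.
have [v [hv hv1 hcase]] := CE_core hn hs hi hc.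
have /andP[hv0 hv2] : (0 < v <= 2 * n)%N by move/allP: hb => /(_ _ hv).
have hvgt : (1 < v)%N by case: hcase => [[-> _] | [? -> _]]; lia.
set T := tm m cs v.
have hst : box n v T - box n v.-1 T = - A n i t.
  have e : v = v.-1.+1 by lia.
  rewrite [in box n v T]e box_step; try lia.
  rewrite /iot /tau.
  case: hcase => [[ev et] | [hin ev et]].
    by subst v; rewrite /= h2 /T et.
  subst v; rewrite /= (_ : (2 * n - i <= n)%N = false); last by lia.
  rewrite (_ : (2 * n - (2 * n - i))%N = i); last by lia.
  by rewrite (_ : (2 * n - i - n)%N = (n - i)%N) ?/T ?et //; lia.
exists (map (fun x => if x == v then v.-1 else x) cs); split.
  apply/and3P; split.
  - apply: sorted_repl => // x hx; last lia.
    move=> hvx; have : x != v.-1 by apply: contraNneq hv1 => <-.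
    lia.
  - apply/allP => y /mapP[x hx ->]; case: eqP => [_|_]; first lia.
    by move/allP: hb => /(_ _ hx).
  - by rewrite size_map.
rewrite colm_repl // -[A n i t]opprK -hst; meq.
Qed.


Definition Asum n (L : seq (nat * int)) : mono := \sum_(x <- L) A n x.1 x.2.

Lemma chain n T a d : (2 <= n)%N -> (0 < a)%N -> (a + d <= 2 * n)%N ->
  exists L, (forall x, x \in L -> inI n x.1 /\ T <= x.2) /\
    box n a T - box n (a + d) T = Asum n L.
Proof.
move=> hn ha; elim: d => [|d IH] hd.
  by exists [::]; split => //; rewrite addn0 subrr /Asum big_nil.
have hd' : (a + d <= 2 * n)%N by lia.
have [L [hL he]] := IH hd'.
have hs := @box_step n (a + d) T hn ltac:(lia) ltac:(lia).
exists (rcons L (iot n (a + d), tau n (a + d) T)); split.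
  move=> x; rewrite mem_rcons in_cons => /orP[/eqP -> | /hL //] /=.
  rewrite /iot /tau; case: ifP => h; split; rewrite /inI; try lia.
rewrite /Asum -cats1 big_cat big_seq1 /= -/(Asum n L) -he addnS.
have -> : A n (iot n (a + d)) (tau n (a + d) T) = box n (a + d) T - box n (a + d).+1 T.
  by rewrite -[LHS]opprK -hs opprB.
meq.
Qed.

Lemma cone_gen n m cs a : (2 <= n)%N -> (0 < a)%N -> sorted ltn cs ->
  all (fun c => (a <= c <= 2 * n)%N) cs ->
  exists L, (forall x, x \in L -> inI n x.1 /\ m <= x.2) /\
    colm n m cs = colm n m (iota a (size cs)) - Asum n L.
Proof.
move=> hn; elim: cs a => [|c r IH] a ha hs hb.
  by exists [::]; split => //=; rewrite /Asum big_nil subr0.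
move: hs; rewrite sorted_consE => /andP[hall hsr].
move: hb => /= /andP[/andP[hac hc2] hb].
have hb' : all (fun c => (a.+1 <= c <= 2 * n)%N) r.
  apply/allP => x hx; move/allP: hall => /(_ _ hx) /=; move/allP: hb => /(_ _ hx) /=; lia.
have [L2 [hL2 e2]] := IH a.+1 (ltn0Sn _) hsr hb'.
have [L1 [hL1 e1]] := @chain n (m + (size r)%:Z) a (c - a) hn ha ltac:(lia).
exists (L1 ++ L2); split.
  move=> x; rewrite mem_cat => /orP[/hL1 [h1 h2] | /hL2 //].
  by split => //; apply: le_trans h2; rewrite lerDl.
rewrite /= e2 size_iota /Asum big_cat /= -!/(Asum n _) -e1.
rewrite (_ : (a + (c - a))%N = c); last by lia.
meq.
Qed.

Lemma cone n m p cs : (2 <= n)%N -> inI n p -> colok n p cs ->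
  exists L, (forall x, x \in L -> inI n x.1 /\ m <= x.2) /\
    colm n m cs = Y n p m - Asum n L.
Proof.
move=> hn hp /and3P[hs hb /eqP hsz].
have hb' : all (fun c => (1 <= c <= 2 * n)%N) cs.
  by apply/allP => x hx; move/allP: hb => /(_ _ hx).
have [L [hL e]] := cone_gen m hn (ltn0Sn 0) hs hb'.
by exists L; split => //; rewrite e hsz colm_top.
Qed.


Lemma Yc0 n a b I K : (a != I) || (b != K) -> coeff (I, K) (Y n a b) = 0.
Proof.
move=> h; rewrite Ycoeff; case/orP: h => h.
  by rewrite (negbTE h) andbF.
by rewrite (negbTE h) andbF.
Qed.

Lemma Yc1 n a b : inI n a -> coeff (a, b) (Y n a b) = 1.
Proof. by move=> h; rewrite Ycoeff h !eqxx. Qed.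

Lemma A_key n j t I K : (2 <= n)%N -> inI n j -> inI n I ->
  ((t + 1 < K) \/ (t + 1 = K /\ (j <= I)%N)) ->
  coeff (I, K) (A n j t) = ((t + 1 == K) && (j == I))%:R.
Proof.
move=> hn hj hI hlex; have /andP[hj1 hj2] := hj.
have z1 : coeff (I, K) (Y n j t) = 0 by apply: Yc0; lia.
have z3 : coeff (I, K) (Y n j.-1 (t + 1)) = 0 by apply: Yc0; lia.
have z4 : coeff (I, K) (Y n j.+1 t) = 0 by apply: Yc0; lia.
rewrite /A; case: ifP => hjn; rewrite !(coeffB, coeffD, coeffMn).
  move/eqP: hjn => ?; subst j.
  rewrite z1 z3 ?add0r ?addr0 ?subr0 ?oppr0.
  case hk: ((t + 1 == K) && (n == I)).
    have [-> ->] : K = t + 1 /\ I = n by lia.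
    by rewrite Yc1.
  by apply: Yc0; lia.
rewrite z1 z3 z4 ?add0r ?addr0 ?subr0 ?oppr0.
case hk: ((t + 1 == K) && (j == I)).
  have [-> ->] : K = t + 1 /\ I = j by lia.
  by rewrite Yc1.
by apply: Yc0; lia.
Qed.

Lemma A_beyond n j t I K k : (2 <= n)%N -> t + 1 <= K -> K < k ->
  coeff (I, k) (A n j t) = 0.
Proof.
move=> hn hK hk.
have z1 : coeff (I, k) (Y n j t) = 0 by apply: Yc0; lia.
have z2 : coeff (I, k) (Y n j (t + 1)) = 0 by apply: Yc0; lia.
have z3 : coeff (I, k) (Y n j.-1 (t + 1)) = 0 by apply: Yc0; lia.
have z4 : coeff (I, k) (Y n j.+1 t) = 0 by apply: Yc0; lia.
have z5 : coeff (I, k) (Y n n.-1 (t + 1)) = 0 by apply: Yc0; lia.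
rewrite /A; case: ifP => hjn; rewrite !(coeffB, coeffD, coeffMn).
  move/eqP: hjn => ?; subst j.
  by rewrite z1 z2 z5 ?add0r ?addr0 ?subr0 ?oppr0.
by rewrite z1 z2 z3 z4 ?add0r ?addr0 ?subr0 ?oppr0.
Qed.

Lemma A_self n i t : (2 <= n)%N -> inI n i ->
  coeff (i, t) (A n i t) = 1 /\ coeff (i, t + 1) (A n i t) = 1.
Proof.
move=> hn hi; have /andP[h1 h2] := hi.
have z3 k : coeff (i, k) (Y n i.-1 (t + 1)) = 0 by apply: Yc0; lia.
have z4 k : coeff (i, k) (Y n i.+1 t) = 0 by apply: Yc0; lia.
have y1 : coeff (i, t) (Y n i (t + 1)) = 0 by apply: Yc0; lia.
have y2 : coeff (i, t + 1) (Y n i t) = 0 by apply: Yc0; lia.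
rewrite /A; case: ifP => hin; rewrite !(coeffB, coeffD, coeffMn).
  move/eqP: hin => ?; subst i.
  by rewrite !z3 y1 y2 !Yc1 // ?add0r ?addr0 ?subr0 ?oppr0.
by rewrite !z3 !z4 y1 y2 !Yc1 // ?add0r ?addr0 ?subr0 ?oppr0.
Qed.

Lemma exists_max (L : seq (nat * int)) : L != [::] ->
  exists2 y : nat * int, y \in L & forall x : nat * int, x \in L -> (x.2 < y.2) \/ (x.2 = y.2 /\ (x.1 <= y.1)%N).
Proof.
elim: L => [|a L IH] // _.
case: L IH => [|b L] IH.
  exists a; first by rewrite mem_seq1.
  by move=> x; rewrite mem_seq1 => /eqP ->; right.
have [y hy hmax] := IH isT.
case: (boolP ((a.2 < y.2) || ((a.2 == y.2) && (a.1 <= y.1)%N))) => [hay | hya].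
- exists y; first by rewrite in_cons hy orbT.
  move=> x; rewrite in_cons => /orP[/eqP -> // | hx]; first by lia.
  exact: hmax.
- exists a; first exact: mem_head.
  move=> x; rewrite in_cons => /orP[/eqP -> | hx]; first by right.
  have := hmax x hx; lia.
Qed.

Lemma coeff_Asum n x L : coeff x (Asum n L) = \sum_(y <- L) coeff x (A n y.1 y.2).
Proof.
rewrite /Asum; elim: L => [|a L IH]; first by rewrite !big_nil coeff0.
by rewrite !big_cons coeffD IH.
Qed.

Lemma LM n (B : mono) (L : seq (nat * int)) (m0 : int) (x0 : nat * int) : (2 <= n)%N -> x0 \in L -> m0 <= x0.2 ->
  (forall x, x \in L -> inI n x.1) -> (forall i k, m0 < k -> coeff (i, k) B = 0) ->
  exists I K, [/\ inI n I, coeff (I, K) (B - Asum n L) < 0 &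
    forall k, K < k -> coeff (I, k) (B - Asum n L) = 0].
Proof.
move=> hn hx0 hm0 hL hB.
have hne : L != [::] by case: L hx0 {hL}.
have [y hy hmax] := exists_max hne.
have hyx := hmax _ hx0.
have hK : m0 < y.2 + 1 by case: hyx; lia.
exists y.1, (y.2 + 1); split.
- exact: hL.
- rewrite coeffB hB //.
  rewrite sub0r oppr_lt0 coeff_Asum.
  rewrite (eq_big_seq (fun x : nat * int => ((x.2 + 1 == y.2 + 1) && (x.1 == y.1))%:R)); last first.
    move=> x hx; apply: A_key => //; [exact: hL | exact: hL | by case: (hmax _ hx); lia].
  rewrite (big_rem _ hy) /= !eqxx /=.
  apply: (@lt_le_trans _ _ 1) => //; rewrite lerDl.
  by apply: sumr_ge0 => x _; case: (_ && _).
- move=> k hk; rewrite coeffB hB; last by lia.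
  rewrite coeff_Asum big1_seq ?subr0 //.
  move=> x /andP[_ hx]; apply: (A_beyond _ _ hn _ hk).
  by case: (hmax _ hx); lia.
Qed.


Lemma inv_step n m p cs N : (2 <= n)%N -> colok n p cs -> cedge n (colm n m cs) N ->
  exists cs', colok n p cs' /\ N = colm n m cs'.
Proof.
move=> hn hok [i [hi hcase]].
have s1 t : coeff (i, t) (A n i t) = 1 by case: (A_self t hn hi).
have s2 t : coeff (i, t + 1) (A n i t) = 1 by case: (A_self t hn hi).
case: hcase.
- move=> [c [nf [[_ hle] _ hnf hmin ->]]].
  have hc : 0 < coeff (i, nf) (colm n m cs).
    rewrite -jump hnf subr_gt0 lt_neqAle hle andbT.
    by apply/eqP => e; have := hmin _ e; lia.
  by have [cs' [h1 h2]] := CF hn hok hi hc; exists cs'; split.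
- move=> [e [c [ne [_ _ [_ hle] [hne hmax ->]]]]].
  have hc : coeff (i, ne + 1) (colm n m cs) < 0.
    rewrite -jump (_ : ne + 1 - 1 = ne); last by lia.
    rewrite hne subr_lt0 lt_neqAle hle andbT.
    by apply/eqP => e'; have := hmax _ e'; lia.
  by have [cs' [h1 h2]] := CE hn hok hi hc; exists cs'; split.
- move=> [c [nf [[_ hle] _ hnf hmin hM]]].
  have hc : coeff (i, nf + 1) (colm n m cs) < 0.
    rewrite hM coeffB (s2 nf) subr_lt0.
    have := jump N i (nf + 1); rewrite (_ : nf + 1 - 1 = nf); last by lia.
    move=> <-; rewrite hnf; have := hle (nf + 1); lia.
  have [cs' [h1 h2]] := CE hn hok hi hc; exists cs'; split => //.
  by rewrite h2 hM subrK.
- move=> [e [c [ne [_ _ [_ hle] [hne hmax hM]]]]].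
  have hc : 0 < coeff (i, ne) (colm n m cs).
    rewrite hM coeffD (s1 ne).
    have := jump N i ne; rewrite hne => h.
    have := hle (ne - 1); lia.
  have [cs' [h1 h2]] := CF hn hok hi hc; exists cs'; split => //.
  by rewrite h2 hM addrK.
Qed.

Lemma comp_inv n m p u : (2 <= n)%N -> inI n p -> mcomp n (Y n p m) u ->
  exists cs, colok n p cs /\ u = colm n m cs.
Proof.
move=> hn hp; elim => [|M N _ [cs [hok ->]] he].
  exists (iota 1 p); split; last by rewrite colm_top.
  apply/and3P; split.
  - exact: iota_ltn_sorted.
  - apply/allP => x; rewrite mem_iota; move: hp => /andP[h1 h2]; lia.
  - by rewrite size_iota.
exact: inv_step hn hok he.
Qed.

Lemma Asum_cat n L1 L2 : Asum n (L1 ++ L2) = Asum n L1 + Asum n L2.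
Proof. by rewrite /Asum big_cat. Qed.

Unset Implicit Arguments.

Theorem corollary5p11 (n : nat) (hn : (2 <= n)%N) (p q : nat)
    (hp : inI n p) (hq : inI n q) (m l : int) (hml : l <= m) (u v : mono) :
  mcomp n (Y n p m) u -> mcomp n (Y n q l) v -> highest n (u + v) ->
  u = Y n p m.
Proof.
move=> hu hv hh.
have [cs [hcs ecs]] := comp_inv hn hp hu.
have [ds [hds eds]] := comp_inv hn hq hv.
have [Lu [hLu eu]] := cone m hn hp hcs.
have [Lv [hLv ev]] := cone l hn hq hds.
case: Lu hLu eu => [|x0 Lu] hLu eu.
  by rewrite ecs eu /Asum big_nil subr0.
exfalso.
have hw : u + v = (Y n p m + Y n q l) - Asum n ((x0 :: Lu) ++ Lv).
  rewrite ecs eds eu ev Asum_cat; meq.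
have hx0 : x0 \in (x0 :: Lu) ++ Lv by rewrite mem_cat mem_head.
have hm0 : m <= x0.2 by case: (hLu x0 (mem_head _ _)).
have hL : forall x, x \in (x0 :: Lu) ++ Lv -> inI n x.1.
  by move=> x; rewrite mem_cat => /orP[/hLu [] | /hLv []].
have hB : forall i k, m < k -> coeff (i, k) (Y n p m + Y n q l) = 0.
  move=> i k hk; rewrite coeffD !Yc0 ?addr0 //; apply/orP; right; apply/eqP; lia.
have [I [K [hI hneg hzero]]] := LM hn hx0 hm0 hL hB.
rewrite -hw in hneg hzero.
have ht := @tsum_last (u + v) I K hzero.
have [_ hle] := hh I hI.
have := hle (K - 1); rewrite ht oppr_le0 => h.
by move: hneg; rewrite ltNge h.
Qed.
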